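(* There exist absolute constants $w_0>0$ and $c>0$ such that for every $w\ge w_0$ the following holds. Let $\tilde x:[0,1]\to\mathbb R$ solve the guided ODE $$\tilde x'(s)=(w+1)-w\tanh\bigl(s\,\tilde x(s)\bigr),\qquad \tilde x(0)=x,$$ with random initialization $x\sim\mathcal N(0,1)$. Then $$\Pr[\tilde x(1)\ge0]\ge1-e^{-cw^2}\qquad\text{and}\qquad \Pr\Bigl[\tilde x(1)\ge\frac{\sqrt{w+1}}{4}\Bigr]\ge1-e^{-cw}.$$
   Context: This ODE is the guided probability flow ODE with guidance parameter $w$, guided toward the component $z=+1$, for the Gaussian mixture $\frac12\mathcal N(1,1)+\frac12\mathcal N(-1,1)$ on $\mathbb R$: in the original time variable $t\in[0,T]$ with $a_t=e^{t-T}$, it reads $x'(t)=x(t)-(w+1)(x(t)-a_t)+w\bigl(x(t)-a_t\tanh(a_tx(t))\bigr)$ with $x(0)\sim\mathcal N(0,1)$; the displayed ODE is obtained via the change of variables $s=a_t$, $\tilde x(s)=x(T+\ln s)$ and letting $T\to\infty$, so that $s$ ranges over $[0,1]$ and $\tilde x(1)$ is the output sample. *)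

(* Defs.v *)
From HB Require Import structures.
From mathcomp Require Import all_boot all_order all_algebra.
From mathcomp Require Import all_classical all_reals all_analysis.
Set Implicit Arguments. Unset Strict Implicit. Unset Printing Implicit Defensive.
Import Order.TTheory GRing.Theory Num.Theory.
Import numFieldTopology.Exports numFieldNormedType.Exports.
Local Open Scope classical_set_scope.
Local Open Scope ring_scope.

Definition tanh {R : realType} (y : R) : R :=
  (expR y - expR (- y)) / (expR y + expR (- y)).

Definition guided_flow {R : realType} (w : R) (phi : R -> R -> R) : Prop :=
  forall x0 : R,
    phi x0 0 = x0 /\
    {within `[0, 1], continuous (phi x0)} /\
    (forall s : R, 0 < s < 1 ->
       is_derive s 1 (phi x0) ((w + 1) - w * tanh (s * phi x0 s))).

(* Main.v *)
Require Import Defs.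
From HB Require Import structures.
From mathcomp Require Import all_boot all_order all_algebra.
From mathcomp Require Import all_classical all_reals all_analysis.
From mathcomp Require Import lra measurable_realfun lebesgue_integral probability.
From mathcomp Require Import lra measurable_realfun lebesgue_integral probability.
Import Order.TTheory GRing.Theory Num.Theory.
Import numFieldTopology.Exports numFieldNormedType.Exports.
Local Open Scope classical_set_scope.
Local Open Scope ring_scope.

Section T.
Context {R : realType}.

Lemma tanh_le1 (y : R) : tanh y <= 1.
Proof.
rewrite /tanh ler_pdivrMr ?addr_gt0 ?expR_gt0 // mul1r.
have := expR_gt0 (- y); lra.
Qed.

Lemma tanh_le0 (y : R) : y <= 0 -> tanh y <= 0.
Proof.
move=> y0; rewrite /tanh ler_pdivrMr ?addr_gt0 ?expR_gt0 // mul0r.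
have : expR y <= expR (- y) by rewrite ler_expR; lra.
lra.
Qed.

Lemma tanh_le_half {y : R} : y <= 1/4 -> tanh y <= 1/2.
Proof.
move=> y4; rewrite /tanh ler_pdivrMr ?addr_gt0 ?expR_gt0 //.
have h1 : expR y <= expR (1/2) * expR (- (1/4)).
  by rewrite -expRD ler_expR; lra.
have h2 : expR (- (1/4)) <= expR (- y) by rewrite ler_expR; lra.
have h3 : expR (1/2 : R) * expR (- (1/2)) = 1 by rewrite -expRD addrN expR0.
have h4 : 1 / 2 <= expR (- (1/2) : R) by have := @expR_ge1Dx R (- (1/2)); lra.
have h5 : expR (1/2 : R) <= 2.
  have := ler_wpM2l (ltW (expR_gt0 (1/2 : R))) h4; lra.
have := expR_gt0 (- (1/4) : R); have := ler_wpM2r (ltW (expR_gt0 (- (1/4)))) h5; lra.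
Qed.

Lemma exp_aux (u v : R) : 1 <= u - v -> 2 * expR (- u) <= expR (- v).
Proof.
move=> uv.
have -> : - v = (u - v) + - u by lra.
rewrite expRD; apply: ler_wpM2r; first exact: ltW (expR_gt0 _).
have := expR_ge1Dx (u - v); lra.
Qed.

Variables (w : R) (phi : R -> R -> R).
Hypothesis H : guided_flow w phi.
Hypothesis w0 : 0 <= w.

Let D x0 s := (w + 1) - w * tanh (s * phi x0 s).

Lemma D_ge1 x0 s : 1 <= D x0 s.
Proof.
rewrite /D; have h := tanh_le1 (s * phi x0 s); have := mulr_ge0 w0 (ltac:(rewrite subr_ge0; exact h) : 0 <= 1 - tanh (s * phi x0 s)); lra.
Qed.

Lemma mvt_lb x0 a b r : 0 <= a -> a <= b -> b <= 1 ->
  (forall s, a < s -> s < b -> r <= D x0 s) ->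
  r * (b - a) <= phi x0 b - phi x0 a.
Proof.
move=> a0 ab b1 hr.
case: (ltgtP a b) ab => // [altb|->] _; last by rewrite !subrr mulr0.
have [_ [hc hd]] := H x0.
have hd' : forall x, x \in `]a, b[ -> is_derive x 1 (phi x0) (D x0 x).
  move=> x; rewrite in_itv /= => /andP [ax xb]; apply: hd; apply/andP; split; lra.
have hc' : {within `[a, b], continuous (phi x0)}.
  apply: continuous_subspaceW hc => x /=; rewrite !in_itv /= => /andP [ax xb].
  apply/andP; split; lra.
have [c cab ->] := MVT altb hd' hc'.
rewrite in_itv /= in cab; case/andP: cab => ac cb.
apply: ler_wpM2r; first lra.
exact: hr.
Qed.

Lemma mono x0 a b : 0 <= a -> a <= b -> b <= 1 -> phi x0 a <= phi x0 b.
Proof.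
move=> a0 ab b1; have := @mvt_lb x0 a b 0 a0 ab b1.
rewrite mul0r subr_ge0; apply => s _ _; have := D_ge1 x0 s; lra.
Qed.

Lemma claim1 x0 : - (w + 1) <= x0 -> 0 <= phi x0 1.
Proof.
move=> hx0; rewrite leNgt; apply/negP => f1.
have hphi0 : phi x0 0 = x0 by have [-> _] := H x0.
have hD : forall s, 0 < s -> s < 1 -> w + 1 <= D x0 s.
  move=> s s0 s1; rewrite /D.
  have fs : phi x0 s <= phi x0 1 by apply: mono; lra.
  have ht : tanh (s * phi x0 s) <= 0 by apply: tanh_le0; apply: mulr_ge0_le0; lra.
  have := mulr_ge0 w0 (ltac:(rewrite oppr_ge0; exact ht) : 0 <= - tanh (s * phi x0 s)); lra.
have := @mvt_lb x0 0 1 (w + 1) (lexx _) ler01 (lexx _) hD.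
rewrite hphi0 subr0 mulr1.
lra.
Qed.

Lemma claim2 x0 : 3 <= w -> - (Num.sqrt (w + 1) / 8) <= x0 ->
  Num.sqrt (w + 1) / 4 <= phi x0 1.
Proof.
move=> w3 hx0.
set q := Num.sqrt (w + 1).
have q2 : q * q = w + 1 by rewrite -expr2 sqr_sqrtr //; lra.
have q0 : 0 < q by rewrite sqrtr_gt0; lra.
have q2' : 2 <= q.
  rewrite leNgt; apply/negP => h; have := ltr_pM (ltW q0) (ltW q0) h h; lra.
set sq := q^-1.
have sqq : sq * q = 1 by rewrite mulVf // gt_eqF.
have sq0 : 0 < sq by rewrite invr_gt0.
have sq1 : sq <= 1 by have := ler_wpM2l (ltW sq0) q2'; lra.
have hphi0 : phi x0 0 = x0 by have [-> _] := H x0.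
case: (lerP (q / 4) (phi x0 sq)) => hs.
  apply: (le_trans hs); apply: mono; lra.
have hD : forall s, 0 < s -> s < sq -> w / 2 <= D x0 s.
  move=> s s0 s1; rewrite /D.
  have fs : phi x0 s <= phi x0 sq by apply: mono; lra.
  have hy : s * phi x0 s <= 1/4.
    case: (lerP 0 (phi x0 s)) => p0; last by have := mulr_ge0_le0 (ltW s0) (ltW p0); lra.
    have : s * phi x0 s <= sq * (q / 4).
      apply: (le_trans (ler_wpM2r p0 (ltW s1))); apply: ler_wpM2l; lra.
    lra.
  have ht := tanh_le_half hy.
  have := mulr_ge0 w0 (ltac:(rewrite subr_ge0; exact ht) : 0 <= 1/2 - tanh (s * phi x0 s)); lra.
have := @mvt_lb x0 0 sq (w / 2) (lexx _) (ltW sq0) sq1 hD.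
rewrite hphi0 subr0.
move=> h; exfalso; have hx0q : - (q / 8) <= x0 by exact: hx0.
have : 3 / 8 * q <= w / 2 * sq.
  have : (3/8 * q) * q <= (w / 2 * sq) * q.
    have -> : w / 2 * sq * q = w / 2 by rewrite -mulrA sqq mulr1.
    lra.
  by rewrite ler_pM2r.
lra.
Qed.

End T.
Lemma int_mono (R : realType) (f : R -> \bar R) (A B : set R) :
  (forall x, (0 <= f x)%E) -> B `<=` A ->
  (\int[lebesgue_measure]_(x in B) f x <= \int[lebesgue_measure]_(x in A) f x)%E.
Proof.
move=> f0 BA.
rewrite !ge0_integralE //.
apply: ereal_sup_le => _ [h /= hB <-]; exists h => //= x.
apply: (le_trans (hB x)); rewrite /patch.
case: ifPn => //; case: ifPn => // /negP xA /[!inE] xB.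
by exfalso; apply: xA; rewrite inE; exact: BA.
Qed.
Lemma peak12 (R : realType) : normal_peak (1:R) = 2 * normal_peak (2:R).
Proof.
rewrite /normal_peak expr1n mul1r.
have -> : (2:R) ^+ 2 * pi *+ 2 = 2 ^+ 2 * (pi *+ 2) by rewrite -mulrnAr.
rewrite sqrtrM ?sqr_ge0 // sqrtr_sqr ger0_norm // invfM mulrA divff ?mul1r //.
Qed.

Lemma pdf_bound (R : realType) (a x : R) : 0 <= a -> x < - a ->
  normal_pdf 0 1 x <= 2 * expR (- (3/8) * a ^+ 2) * normal_pdf 0 2 x.
Proof.
move=> a0 xa.
rewrite !normal_pdfE ?oner_neq0 ?pnatr_eq0 // peak12 /normal_fun !subr0.
have hx : a ^+ 2 <= x ^+ 2.
  rewrite -ler_sqrt ?sqr_ge0 // !sqrtr_sqr ger0_norm // ltr0_norm; last by lra.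
  lra.
have -> : - x ^+ 2 / (1 ^+ 2 *+ 2) = - (3/8) * x ^+ 2 + - x ^+ 2 / (2 ^+ 2 *+ 2).
  have -> : (1:R) ^+ 2 *+ 2 = 2 by rewrite expr1n.
  have -> : (2:R) ^+ 2 *+ 2 = 8 by rewrite expr2 -mulr_natr; lra.
  lra.
rewrite expRD.

have e1 : expR (- (3/8) * x ^+ 2) <= expR (- (3/8) * a ^+ 2).
  rewrite ler_expR; lra.
have p0 := normal_peak_ge0 (2:R).
have f0 := expR_ge0 (- x ^+ 2 / (2 ^+ 2 *+ 2)).
have g0 := expR_ge0 (- (3/8) * x ^+ 2).
move: e1 p0 f0 g0.
set P := normal_peak _; set E1 := expR (- (3/8) * x ^+ 2); set E2 := expR (- _ / _); set E3 := expR _.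
move=> e1 p0 f0 g0.
have := ler_wpM2r (mulr_ge0 p0 f0) e1.
lra.
Qed.

Lemma tail (R : realType) (a : R) : 0 <= a ->
  (normal_prob 0 1 [set` `]-oo, (- a)%R[%R] <= (2 * expR (- (3/8) * a ^+ 2))%:E)%E.
Proof.
move=> a0; set k := 2 * expR _.
have k0 : 0 <= k by rewrite mulr_ge0 ?expR_ge0.
rewrite /normal_prob.
apply: (@le_trans _ _ (\int[lebesgue_measure]_(x in [set` `]-oo, (- a)%R[%R]) (k * normal_pdf 0 2 x)%:E)%E).
  refine (ge0_le_integral _ _ _ _ _ _) => //.
  - by move=> x _; rewrite lee_fin normal_pdf_ge0.
  - apply/measurable_EFinP; apply: measurable_funTS; exact: measurable_normal_pdf.
  - apply/measurable_EFinP; apply: measurable_funTS; apply: measurable_funM => //; exact: measurable_normal_pdf.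
  - by move=> x /=; rewrite in_itv /= => xa; rewrite lee_fin; apply: pdf_bound.
apply: (@le_trans _ _ (\int[lebesgue_measure]_(x in setT) (k * normal_pdf 0 2 x)%:E)%E).
  apply: int_mono => //.
  by move=> x; rewrite lee_fin mulr_ge0 // normal_pdf_ge0.
have -> : (\int[lebesgue_measure]_(x in setT) (k * normal_pdf 0 2 x)%:E)%E =
  (\int[lebesgue_measure]_(x in setT) (k%:E * (normal_pdf 0 2 x)%:E))%E.
  by apply: eq_integral => x _; rewrite EFinM.
rewrite ge0_integralZl //=.
- by rewrite integral_normal_pdf mule1.
- apply/measurable_EFinP; exact: measurable_normal_pdf.
- by move=> x _; rewrite lee_fin normal_pdf_ge0.
Qed.

Lemma prob_lb (R : realType) (A : set R) (a : R) : 0 <= a ->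
  (forall x, - a <= x -> A x) ->
  ((1 - 2 * expR (- (3/8) * a ^+ 2))%:E <= normal_prob 0 1 A)%E.
Proof.
move=> a0 hA.
set C := [set` `]-oo, (- a)%R[%R].
have mC : measurable C by exact: measurable_itv.
apply: (@le_trans _ _ (normal_prob 0 1 (~` C))).
  rewrite probability_setC // EFinB.
  apply: leeB => //; exact: tail.
apply: int_mono.
  by move=> x; rewrite lee_fin normal_pdf_ge0.
by move=> x /= xC; apply: hA; rewrite leNgt; by apply/negP => xa; apply: xC.
Qed.

Theorem theorem4p1 (R : realType) :
  exists w0 : R, exists c : R, 0 < w0 /\ 0 < c /\
  forall w : R, w0 <= w ->
  forall phi : R -> R -> R, guided_flow w phi ->
    ((1 - expR (- c * w ^+ 2))%:E <= normal_prob 0%R 1%R [set x | (0 <= phi x 1)%R])%E /\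
    ((1 - expR (- c * w))%:E <=
       normal_prob 0%R 1%R [set x | (Num.sqrt (w + 1) / 4 <= phi x 1)%R])%E.
Proof.
exists 256, (1/512); split; first lra; split; first lra.
move=> w hw phi H.
have w0 : 0 <= w by lra.
split.
- have hA : forall x, - (w + 1) <= x -> [set x | (0 <= phi x 1)%R] x.
    by move=> x hx; exact: (@claim1 R w phi H w0 x hx).
  have a0 : 0 <= w + 1 by lra.
  apply: le_trans (@prob_lb R _ (w + 1) a0 hA).
  rewrite lee_fin lerB //.
  have -> : - (1/512) * w ^+ 2 = - ((1/512) * w ^+ 2) by lra.
  have -> : - (3/8) * (w + 1) ^+ 2 = - ((3/8) * (w + 1) ^+ 2) by lra.
  apply: exp_aux; rewrite !expr2; have := mulr_ge0 w0 w0; lra.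
- set q := Num.sqrt (w + 1).
  have q2 : q ^+ 2 = w + 1 by rewrite sqr_sqrtr //; lra.
  have q0 : 0 <= q by exact: sqrtr_ge0.
  have hA : forall x, - (q / 8) <= x -> [set x | (Num.sqrt (w + 1) / 4 <= phi x 1)%R] x.
    move=> x hx; apply: (@claim2 R w phi H w0 x) => //; lra.
  have a0 : 0 <= q / 8 by lra.
  apply: le_trans (@prob_lb R _ (q / 8) a0 hA).
  rewrite lee_fin lerB //.
  have -> : - (1/512) * w = - ((1/512) * w) by lra.
  have -> : - (3/8) * (q / 8) ^+ 2 = - ((3/8) * (w + 1) / 64) by rewrite expr_div_n q2; lra.
  apply: exp_aux; lra.
Qed.
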